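(* Let $\Gamma$ be a Fuchsian group and let $z_0\in\mathbb{H}^2$ be a point not fixed by any non-identity element of $\Gamma$. Define $B_\Gamma(z_0)=\bigcup_{z\in D_\Gamma(z_0)}D_\Gamma(z)$ and $U_\Gamma(z_0)=\{\gamma\in\Gamma:\ \gamma\cdot D_\Gamma(z_0)\cap B_\Gamma(z_0)\neq\emptyset\}$. Then $U_\Gamma(z_0)$ is a geodesic cover of $\Gamma$ corresponding to the fundamental domain $D_\Gamma(z_0)$.
   Context: $\Gamma$ acts on the upper half plane $\mathbb{H}^2$ by Möbius transformations; $d_{\mathbb{H}^2}$ is the hyperbolic metric. For $w\in\mathbb{H}^2$, the Dirichlet domain is $D_\Gamma(w)=\{z\in\mathbb{H}^2: d_{\mathbb{H}^2}(z,w)\leq d_{\mathbb{H}^2}(z,\gamma\cdot w)\ \forall\gamma\in\Gamma\}$; when $w$ is not fixed by a non-identity element it is a fundamental domain. A subset $\Gamma_0\subset\Gamma$ containing the identity is a geodesic cover of $\Gamma$ corresponding to a fundamental domain $F$ if for all $p,q\in F$, $\min_{\gamma\in\Gamma}d_{\mathbb{H}^2}(p,\gamma\cdot q)=\min_{\gamma\in\Gamma_0}d_{\mathbb{H}^2}(p,\gamma\cdot q)$. *)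

(* Defs.v *)
From Stdlib Require Import Reals.
From Coquelicot Require Import Coquelicot.
Open Scope R_scope.

(* 2x2 real matrices (a b ; c d) *)
Record Mat2 := mkMat2 { ma : R; mb : R; mc : R; md : R }.

Definition det2 (g : Mat2) : R := ma g * md g - mb g * mc g.
Definition mat_id : Mat2 := mkMat2 1 0 0 1.
Definition mat_negid : Mat2 := mkMat2 (-1) 0 0 (-1).
Definition mat_mul (g h : Mat2) : Mat2 :=
  mkMat2 (ma g * ma h + mb g * mc h) (ma g * mb h + mb g * md h)
         (mc g * ma h + md g * mc h) (mc g * mb h + md g * md h).
(* inverse of a determinant-one matrix *)
Definition mat_inv (g : Mat2) : Mat2 := mkMat2 (md g) (- mb g) (- mc g) (ma g).

Definition H2 (z : C) : Prop := 0 < Im z.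

Definition mobius (g : Mat2) (z : C) : C :=
  Cdiv (Cplus (Cmult (RtoC (ma g)) z) (RtoC (mb g)))
       (Cplus (Cmult (RtoC (mc g)) z) (RtoC (md g))).

Definition arcosh (x : R) : R := ln (x + sqrt (x * x - 1)).

Definition dH (z w : C) : R :=
  arcosh (1 + (Cmod (Cminus z w))^2 / (2 * Im z * Im w)).

(* A Fuchsian group, given by its (lift to a) subgroup of SL(2,R) whose
   identity is isolated (discreteness). *)
Definition is_SL2_subgroup (G : Mat2 -> Prop) : Prop :=
  (forall g, G g -> det2 g = 1) /\ G mat_id /\
  (forall g h, G g -> G h -> G (mat_mul g h)) /\
  (forall g, G g -> G (mat_inv g)).

Definition discrete_group (G : Mat2 -> Prop) : Prop :=
  exists eps, 0 < eps /\ forall g, G g ->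
    Rabs (ma g - 1) < eps -> Rabs (mb g) < eps -> Rabs (mc g) < eps ->
    Rabs (md g - 1) < eps -> g = mat_id.

Definition Fuchsian (G : Mat2 -> Prop) : Prop :=
  is_SL2_subgroup G /\ discrete_group G.

Definition Dirichlet (G : Mat2 -> Prop) (w : C) (z : C) : Prop :=
  H2 z /\ forall g, G g -> dH z w <= dH z (mobius g w).

Definition B_set (G : Mat2 -> Prop) (z0 : C) (u : C) : Prop :=
  exists z, Dirichlet G z0 z /\ Dirichlet G z u.

Definition U_set (G : Mat2 -> Prop) (z0 : C) (g : Mat2) : Prop :=
  G g /\ exists z, Dirichlet G z0 z /\ B_set G z0 (mobius g z).

Definition geodesic_cover (G G0 : Mat2 -> Prop) (F : C -> Prop) : Prop :=
  (forall g, G0 g -> G g) /\ G0 mat_id /\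
  forall p q, F p -> F q ->
    exists g0, G0 g0 /\ forall g, G g -> dH p (mobius g0 q) <= dH p (mobius g q).

(* Main.v *)
Require Import Defs.
From Stdlib Require Import Reals Lra Lia Psatz List ZArith Classical ClassicalEpsilon.
From Coquelicot Require Import Coquelicot.
Open Scope R_scope.

Definition Dn (g : Mat2) (z : C) : R :=
  (mc g * fst z + md g)^2 + (mc g * snd z)^2.
Definition mre (g : Mat2) (z : C) : R :=
  ((ma g * fst z + mb g) * (mc g * fst z + md g) + ma g * mc g * snd z * snd z) / Dn g z.
Definition mim (g : Mat2) (z : C) : R := snd z * det2 g / Dn g z.

Lemma Dn_pos g z : det2 g = 1 -> 0 < snd z -> 0 < Dn g z.
Proof.
  intros Hd Hz. unfold Dn, det2 in *.
  destruct (Req_dec (mc g) 0) as [H|H].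
  - rewrite H in *. assert (md g <> 0) by (intro; rewrite H0 in Hd; lra).
    assert (0 < md g ^2) by (apply pow2_gt_0; auto). nra.
  - assert (0 < (mc g * snd z)^2). { apply pow2_gt_0. intro. apply Rmult_integral in H0. lra. }
    assert (0 <= (mc g * fst z + md g)^2) by apply pow2_ge_0. lra.
Qed.

Lemma mobius_comp g z : Dn g z <> 0 -> mobius g z = (mre g z, mim g z).
Proof.
  intro H. destruct z as [x y]. unfold mobius, mre, mim, Dn, det2 in *; simpl in *.
  unfold Cdiv, Cplus, Cmult, Cinv, RtoC; simpl. f_equal; field; lra.
Qed.

Definition dl (z w : C) : R :=
  ((fst z - fst w)^2 + (snd z - snd w)^2) / (2 * snd z * snd w).

Lemma dH_dl z w : dH z w = arcosh (1 + dl z w).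
Proof.
  unfold dH. apply f_equal. unfold dl, Cmod. rewrite pow2_sqrt.
  - destruct z, w; unfold Im; simpl. unfold Rdiv. ring.
  - apply Rplus_le_le_0_compat; apply pow2_ge_0.
Qed.

Lemma iso_alg a b c d x y x' y' :
  (c*x+d)^2+(c*y)^2 <> 0 -> (c*x'+d)^2+(c*y')^2 <> 0 ->
  (((a*x+b)*(c*x+d)+a*c*y*y)/((c*x+d)^2+(c*y)^2) - ((a*x'+b)*(c*x'+d)+a*c*y'*y')/((c*x'+d)^2+(c*y')^2))^2
  + (y*(a*d-b*c)/((c*x+d)^2+(c*y)^2) - y'*(a*d-b*c)/((c*x'+d)^2+(c*y')^2))^2
  = ((x-x')^2+(y-y')^2)*(a*d-b*c)^2/(((c*x+d)^2+(c*y)^2)*((c*x'+d)^2+(c*y')^2)).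
Proof. intros. field. auto. Qed.

Lemma dl_iso g z w : det2 g = 1 -> 0 < snd z -> 0 < snd w ->
  dl (mobius g z) (mobius g w) = dl z w.
Proof.
  intros Hd Hz Hw.
  pose proof (Dn_pos g z Hd Hz). pose proof (Dn_pos g w Hd Hw).
  rewrite !mobius_comp by lra.
  destruct z as [x y]; destruct w as [x' y']. cbn [fst snd] in *.
  unfold dl, mre, mim, Dn, det2 in *; cbn [fst snd] in *.
  rewrite iso_alg by lra. rewrite Hd. field. lra.
Qed.

Lemma det_mul g h : det2 (mat_mul g h) = det2 g * det2 h.
Proof. unfold det2, mat_mul; simpl; ring. Qed.

Lemma mim_pos g z : det2 g = 1 -> 0 < snd z -> 0 < mim g z.
Proof. intros. unfold mim. rewrite H. pose proof (Dn_pos g z H H0).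
  apply Rdiv_lt_0_compat; lra. Qed.

Lemma H2_mob g z : det2 g = 1 -> H2 z -> H2 (mobius g z).
Proof. intros Hd Hz. unfold H2 in *. rewrite mobius_comp.
  - apply mim_pos; auto.
  - pose proof (Dn_pos g z Hd Hz). lra. Qed.

Lemma mob_mul g h z : det2 g = 1 -> det2 h = 1 -> 0 < snd z ->
  mobius (mat_mul g h) z = mobius g (mobius h z).
Proof.
  intros Hg Hh Hz.
  assert (Hgh : det2 (mat_mul g h) = 1) by (rewrite det_mul, Hg, Hh; ring).
  pose proof (Dn_pos _ _ Hgh Hz) as P1.
  pose proof (Dn_pos _ _ Hh Hz) as P2.
  pose proof (mim_pos h z Hh Hz) as P3.
  rewrite (mobius_comp h z) by lra.
  pose proof (Dn_pos g (mre h z, mim h z) Hg P3) as P4.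
  rewrite !mobius_comp by lra.
  destruct z as [x y]; destruct g as [a b c d]; destruct h as [a' b' c' d'].
  unfold mre, mim, Dn, det2, mat_mul in *; cbn [fst snd ma mb mc md] in *.
  clear Hgh Hg Hh.
  set (D2 := (c' * x + d') ^ 2 + (c' * y) ^ 2) in *.
  assert (Q : (c * ((a' * x + b') * (c' * x + d') + a' * c' * y * y) +
   d * D2) ^ 2 + (c * (y * (a' * d' - b' * c'))) ^ 2 = D2^2 *
   ((c * (((a' * x + b') * (c' * x + d') + a' * c' * y * y) / D2) + d)
    ^ 2 + (c * (y * (a' * d' - b' * c') / D2)) ^ 2)) by (field; lra).
  assert (Q2 : 0 < D2^2) by (apply pow2_gt_0; lra).
  assert (Q3 := Rmult_lt_0_compat _ _ Q2 P4).
  f_equal; unfold D2 in *; (field; split; [|split]; lra).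
Qed.

Lemma bound_core px py x y M a b c d : 0 < py -> 0 < y -> 0 <= M -> a*d - b*c = 1 ->
  let D := (c*x+d)^2 + (c*y)^2 in
  let u := ((a*x+b)*(c*x+d) + a*c*y*y)/D in
  let v := y*(a*d-b*c)/D in
  (px-u)^2 + (py-v)^2 <= 2*M*py*v ->
  let V := (2*M+2)*py in
  let Dm := y*(2*M+2)/py in
  let S := (2*px^2 + 4*M*py*V + V^2)*Dm in
  a^2 + b^2 + c^2 + d^2 <= S/y^2 + (2*S + 2*(S/y^2)*x^2) + Dm/y^2 + (2*Dm + 2*(Dm/y^2)*x^2).
Proof.
  intros Hpy Hy HM Hd D u v H V Dm S.
  assert (HD : 0 < D).
  { unfold D. destruct (Req_dec c 0) as [Hc|Hc].
    - subst c. assert (d <> 0) by (intro; subst; lra).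
      assert (0 < d^2) by (apply pow2_gt_0; auto). nra.
    - assert (0 < (c*y)^2). { apply pow2_gt_0. intro H0. apply Rmult_integral in H0. lra. }
      assert (0 <= (c*x+d)^2) by apply pow2_ge_0. lra. }
  assert (Hv : v = y / D) by (unfold v; rewrite Hd; field; lra).
  assert (Hv0 : 0 < v) by (rewrite Hv; apply Rdiv_lt_0_compat; lra).
  assert (H1 : (py - v)^2 <= 2*M*py*v) by (assert (0 <= (px-u)^2) by apply pow2_ge_0; lra).
  assert (H1' : (px - u)^2 <= 2*M*py*v) by (assert (0 <= (py-v)^2) by apply pow2_ge_0; lra).
  assert (HvV : v <= V) by (unfold V; nra).
  assert (HvL : py <= (2*M+2) * v) by nra.
  assert (HDv : D * v = y) by (rewrite Hv; field; lra).
  assert (HDm : D <= Dm).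
  { unfold Dm. apply Rmult_le_reg_r with (r := py); [lra|].
    unfold Rdiv. rewrite Rmult_assoc, Rinv_l by lra. nra. }
  assert (Hy2 : 0 < y^2) by (apply pow2_gt_0; lra).
  assert (Hc : c^2 <= Dm/y^2).
  { apply Rmult_le_reg_r with (r := y^2); [lra|].
    unfold Rdiv. rewrite Rmult_assoc, Rinv_l by lra.
    assert (0 <= (c*x+d)^2) by apply pow2_ge_0. unfold D in HDm. nra. }
  assert (Hcx : (c*x+d)^2 <= Dm).
  { assert (0 <= (c*y)^2) by apply pow2_ge_0. unfold D in HDm. lra. }
  assert (Hdd : d^2 <= 2*Dm + 2*(Dm/y^2)*x^2).
  { assert (d^2 <= 2*(c*x+d)^2 + 2*(c^2*x^2)).
    { assert (0 <= (2*c*x+d)^2) by apply pow2_ge_0. nra. }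
    assert (0 <= x^2) by apply pow2_ge_0.
    assert (c^2*x^2 <= (Dm/y^2)*x^2) by (apply Rmult_le_compat_r; lra). lra. }
  assert (Hu : u^2 <= 2*px^2 + 4*M*py*V).
  { assert (u^2 <= 2*px^2 + 2*(px-u)^2) by (assert (0 <= (2*px-u)^2) by apply pow2_ge_0; nra).
    assert (M*py*v <= M*py*V) by (apply Rmult_le_compat_l; nra). nra. }
  assert (Lag : (a*x+b)^2 + (a*y)^2 = (u^2+v^2)*D).
  { unfold u, v, D in *. clear Hv HDv Hv0 H H1 H1' HvV HvL. field. lra. }
  assert (HS : (a*x+b)^2 + (a*y)^2 <= S).
  { rewrite Lag. unfold S. assert (0 <= u^2) by apply pow2_ge_0.
    assert (v^2 <= V^2) by nra. 
    apply Rmult_le_compat; nra. }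
  assert (Ha : a^2 <= S/y^2).
  { apply Rmult_le_reg_r with (r := y^2); [lra|].
    unfold Rdiv. rewrite Rmult_assoc, Rinv_l by lra.
    assert (0 <= (a*x+b)^2) by apply pow2_ge_0. nra. }
  assert (Hb : b^2 <= 2*S + 2*(S/y^2)*x^2).
  { assert (b^2 <= 2*(a*x+b)^2 + 2*(a^2*x^2)).
    { assert (0 <= (2*a*x+b)^2) by apply pow2_ge_0. nra. }
    assert (0 <= x^2) by apply pow2_ge_0. assert (0 <= (a*y)^2) by apply pow2_ge_0.
    assert (a^2*x^2 <= (S/y^2)*x^2) by (apply Rmult_le_compat_r; lra). lra. }
  lra.
Qed.

Lemma abs_le_sq t : Rabs t <= 1 + t^2.
Proof. unfold Rabs; destruct Rcase_abs; nra. Qed.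

Lemma entry_bound p q M : H2 p -> H2 q -> 0 <= M -> exists K, 0 < K /\
  forall g, det2 g = 1 -> dl p (mobius g q) <= M ->
  Rabs (ma g) <= K /\ Rabs (mb g) <= K /\ Rabs (mc g) <= K /\ Rabs (md g) <= K.
Proof.
  intros Hp Hq HM. destruct p as [px py]; destruct q as [x y]. unfold H2, Im in *; cbn [fst snd] in *.
  set (V := (2*M+2)*py). set (Dm := y*(2*M+2)/py).
  set (S := (2*px^2 + 4*M*py*V + V^2)*Dm).
  set (Bt := S/y^2 + (2*S + 2*(S/y^2)*x^2) + Dm/y^2 + (2*Dm + 2*(Dm/y^2)*x^2)).
  exists (1 + Rabs Bt). split; [pose proof (Rabs_pos Bt); lra|].
  intros g Hd Hdl.
  pose proof (Dn_pos g (x,y) Hd Hq) as HD.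
  rewrite mobius_comp in Hdl by lra.
  pose proof (mim_pos g (x,y) Hd Hq) as Hv.
  unfold dl, mre, mim, Dn, det2 in *; cbn [fst snd] in *.
  destruct g as [a b c d]; cbn [ma mb mc md] in *.
  assert (H1 : (px - ((a * x + b) * (c * x + d) + a * c * y * y) / ((c * x + d) ^ 2 + (c * y) ^ 2)) ^ 2 +
      (py - y * (a * d - b * c) / ((c * x + d) ^ 2 + (c * y) ^ 2)) ^ 2 <=
      2 * M * py * (y * (a * d - b * c) / ((c * x + d) ^ 2 + (c * y) ^ 2))).
  { set (T := y * (a * d - b * c) / ((c * x + d) ^ 2 + (c * y) ^ 2)) in *.
    assert (0 < 2*py*T) by nra.
    apply Rmult_le_compat_r with (r := 2*py*T) in Hdl; [|lra].
    unfold Rdiv in Hdl. rewrite Rmult_assoc, Rinv_l in Hdl by lra. lra. }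
  pose proof (bound_core px py x y M a b c d Hp Hq HM Hd H1) as HB.
  cbv zeta in HB. fold V Dm S Bt in HB.
  pose proof (Rle_abs Bt).
  assert (0 <= a^2) by apply pow2_ge_0. assert (0 <= b^2) by apply pow2_ge_0.
  assert (0 <= c^2) by apply pow2_ge_0. assert (0 <= d^2) by apply pow2_ge_0.
  pose proof (abs_le_sq a). pose proof (abs_le_sq b). pose proof (abs_le_sq c). pose proof (abs_le_sq d).
  repeat split; lra.
Qed.

Lemma inv_mul_id_eq g h : det2 h = 1 -> mat_mul (mat_inv h) g = mat_id -> g = h.
Proof.
  destruct g as [a b c d]; destruct h as [a' b' c' d'].
  unfold det2, mat_mul, mat_inv, mat_id; cbn. intros Hd E. injection E as E1 E2 E3 E4.
  f_equal.
  - transitivity (a*(a'*d'-b'*c')); [rewrite Hd; ring|].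
    transitivity (a'*(d'*a + -b'*c) + b'*(-c'*a + a'*c)); [ring|]. rewrite E1, E3. ring.
  - transitivity (b*(a'*d'-b'*c')); [rewrite Hd; ring|].
    transitivity (a'*(d'*b + -b'*d) + b'*(-c'*b + a'*d)); [ring|]. rewrite E2, E4. ring.
  - transitivity (c*(a'*d'-b'*c')); [rewrite Hd; ring|].
    transitivity (c'*(d'*a + -b'*c) + d'*(-c'*a + a'*c)); [ring|]. rewrite E1, E3. ring.
  - transitivity (d*(a'*d'-b'*c')); [rewrite Hd; ring|].
    transitivity (c'*(d'*b + -b'*d) + d'*(-c'*b + a'*d)); [ring|]. rewrite E2, E4. ring.
Qed.

Lemma close_eq (G : Mat2 -> Prop) eps K g h : is_SL2_subgroup G ->
  (forall g, G g -> Rabs (ma g - 1) < eps -> Rabs (mb g) < eps -> Rabs (mc g) < eps ->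
    Rabs (md g - 1) < eps -> g = mat_id) -> 0 < eps -> 0 < K ->
  G g -> G h ->
  Rabs (ma h) <= K -> Rabs (mb h) <= K -> Rabs (mc h) <= K -> Rabs (md h) <= K ->
  Rabs (ma g - ma h) < eps/(2*K+1) -> Rabs (mb g - mb h) < eps/(2*K+1) ->
  Rabs (mc g - mc h) < eps/(2*K+1) -> Rabs (md g - md h) < eps/(2*K+1) -> g = h.
Proof.
  intros [Hdet [Hid [Hmul Hinv]]] Hdisc He HK Hg Hh B1 B2 B3 B4 C1 C2 C3 C4.
  apply inv_mul_id_eq; [auto|]. apply Hdisc; [auto|..].
  all: assert (Hdh := Hdet h Hh); unfold det2 in Hdh.
  all: set (eta := eps/(2*K+1)) in *.
  all: assert (Heta : (2*K+1)*eta = eps) by (unfold eta; field; lra).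
  all: assert (0 <= eta) by (pose proof (Rabs_pos (ma g - ma h)); lra).
  all: destruct g as [a b c d]; destruct h as [a' b' c' d']; unfold mat_mul, mat_inv; cbn in *.
  - replace (d'*a + -b'*c - 1) with (d'*(a-a') - b'*(c-c')) by nra.
    eapply Rle_lt_trans; [apply Rabs_triang|]. rewrite Rabs_Ropp, !Rabs_mult.
    assert (Rabs d' * Rabs (a-a') <= K*eta) by (apply Rmult_le_compat; auto using Rabs_pos; lra).
    assert (Rabs b' * Rabs (c-c') <= K*eta) by (apply Rmult_le_compat; auto using Rabs_pos; lra).
    nra.
  - replace (d'*b + -b'*d) with (d'*(b-b') - b'*(d-d')) by ring.
    eapply Rle_lt_trans; [apply Rabs_triang|]. rewrite Rabs_Ropp, !Rabs_mult.
    assert (Rabs d' * Rabs (b-b') <= K*eta) by (apply Rmult_le_compat; auto using Rabs_pos; lra).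
    assert (Rabs b' * Rabs (d-d') <= K*eta) by (apply Rmult_le_compat; auto using Rabs_pos; lra).
    nra.
  - replace (-c'*a + a'*c) with (a'*(c-c') - c'*(a-a')) by ring.
    eapply Rle_lt_trans; [apply Rabs_triang|]. rewrite Rabs_Ropp, !Rabs_mult.
    assert (Rabs a' * Rabs (c-c') <= K*eta) by (apply Rmult_le_compat; auto using Rabs_pos; lra).
    assert (Rabs c' * Rabs (a-a') <= K*eta) by (apply Rmult_le_compat; auto using Rabs_pos; lra).
    nra.
  - replace (-c'*b + a'*d - 1) with (a'*(d-d') - c'*(b-b')) by nra.
    eapply Rle_lt_trans; [apply Rabs_triang|]. rewrite Rabs_Ropp, !Rabs_mult.
    assert (Rabs a' * Rabs (d-d') <= K*eta) by (apply Rmult_le_compat; auto using Rabs_pos; lra).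
    assert (Rabs c' * Rabs (b-b') <= K*eta) by (apply Rmult_le_compat; auto using Rabs_pos; lra).
    nra.
Qed.

Definition idx (K eta t : R) : nat := Z.to_nat (up ((t+K)/eta)).

Lemma idx_close K eta t s : 0 < eta -> Rabs t <= K -> Rabs s <= K ->
  idx K eta t = idx K eta s -> Rabs (t - s) < eta.
Proof.
  intros He Ht Hs E. unfold idx in E.
  apply Rabs_le_between in Ht. apply Rabs_le_between in Hs.
  assert (Hr : 0 <= (t+K)/eta) by (apply Rdiv_le_0_compat; lra).
  assert (Hs' : 0 <= (s+K)/eta) by (apply Rdiv_le_0_compat; lra).
  destruct (archimed ((t+K)/eta)) as [A1 A2].
  destruct (archimed ((s+K)/eta)) as [B1 B2].
  assert (0 <= up ((t+K)/eta))%Z by (apply le_IZR; lra).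
  assert (0 <= up ((s+K)/eta))%Z by (apply le_IZR; lra).
  apply Z2Nat.inj in E; auto. rewrite E in A1, A2.
  assert (Hrs : Rabs ((t+K)/eta - (s+K)/eta) < 1) by (apply Rabs_def1; lra).
  replace ((t+K)/eta - (s+K)/eta) with ((t-s)/eta) in Hrs by (field; lra).
  unfold Rdiv in Hrs. rewrite Rabs_mult, Rabs_inv, (Rabs_right eta) in Hrs by lra.
  apply Rmult_lt_compat_r with (r := eta) in Hrs; [|lra].
  rewrite Rmult_assoc, Rinv_l, Rmult_1_r in Hrs by lra. lra.
Qed.

Lemma idx_lt K eta t : 0 < eta -> 0 < K -> Rabs t <= K ->
  (idx K eta t < S (Z.to_nat (up (2*K/eta))))%nat.
Proof.
  intros He HK Ht. unfold idx. apply Rabs_le_between in Ht.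
  assert (Hr : 0 <= (t+K)/eta) by (apply Rdiv_le_0_compat; lra).
  assert (Hle : (t+K)/eta <= 2*K/eta) by (apply Rmult_le_compat_r; [apply Rlt_le, Rinv_0_lt_compat; lra | lra]).
  destruct (archimed ((t+K)/eta)) as [A1 A2].
  destruct (archimed (2*K/eta)) as [B1 B2].
  assert (0 <= up ((t+K)/eta))%Z by (apply le_IZR; lra).
  assert (up ((t+K)/eta) < up (2*K/eta) + 1)%Z by (apply lt_IZR; rewrite plus_IZR; lra).
  lia.
Qed.

Lemma map_NoDup_inj {T} (F : nat -> T) l : (forall n m, F n = F m -> n = m) -> NoDup l -> NoDup (map F l).
Proof.
  intros HF. induction 1; simpl; constructor; auto.
  intro HI. apply in_map_iff in HI. destruct HI as [y [Hy Hy']].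
  apply HF in Hy. subst; auto.
Qed.

Lemma pigeon {T} (F : nat -> T) (L : list T) : (forall n m, F n = F m -> n = m) ->
  (forall n, In (F n) L) -> False.
Proof.
  intros HF HL.
  assert (H := @NoDup_incl_length _ _ L (map_NoDup_inj F (seq 0 (S (length L))) HF (seq_NoDup _ _))).
  rewrite length_map, length_seq in H.
  assert (S (length L) <= length L)%nat; [apply H | lia].
  intros x Hx. apply in_map_iff in Hx. destruct Hx as [n [<- _]]. apply HL.
Qed.

Lemma mobius_id z : mobius mat_id z = z.
Proof. destruct z as [x y]. unfold mobius, mat_id, Cdiv, Cplus, Cmult, Cinv, RtoC; cbn.
  f_equal; field. Qed.

Lemma dl_nonneg z w : 0 < snd z -> 0 < snd w -> 0 <= dl z w.
Proof. intros. unfold dl. apply Rdiv_le_0_compat.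
  - apply Rplus_le_le_0_compat; apply pow2_ge_0.
  - nra. Qed.

Lemma exists_min G p q : Fuchsian G -> H2 p -> H2 q ->
  exists g0, G g0 /\ forall g, G g -> dl p (mobius g0 q) <= dl p (mobius g q).
Proof.
  intros [HS [eps [He Hdisc]]] Hp Hq.
  pose proof HS as [Hdet [Hid [Hmul Hinv]]].
  destruct (classic (exists g0, G g0 /\ forall g, G g -> dl p (mobius g0 q) <= dl p (mobius g q))) as [|Hn]; auto.
  exfalso.
  assert (Hstep : forall g0, G g0 -> {g | G g /\ dl p (mobius g q) < dl p (mobius g0 q)}).
  { intros g0 Hg0. apply constructive_indefinite_description.
    apply NNPP. intro Hc. apply Hn. exists g0. split; auto.
    intros g Hg. apply Rnot_lt_le. intro Hlt. apply Hc. exists g. auto. }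
  set (T := {g | G g}).
  set (next := fun t : T => exist G (proj1_sig (Hstep (proj1_sig t) (proj2_sig t)))
      (proj1 (proj2_sig (Hstep (proj1_sig t) (proj2_sig t)))) : T).
  set (t0 := exist G mat_id Hid : T).
  set (sq := fun n => proj1_sig (Nat.iter n next t0)).
  assert (HG : forall n, G (sq n)) by (intro n; exact (proj2_sig (Nat.iter n next t0))).
  set (f := fun n => dl p (mobius (sq n) q)).
  assert (Hdec : forall n, f (S n) < f n).
  { intro n. unfold f, sq. cbn [Nat.iter]. unfold next at 1. cbn [proj1_sig].
    exact (proj2 (proj2_sig (Hstep (proj1_sig (Nat.iter n next t0)) (proj2_sig (Nat.iter n next t0))))). }
  assert (Hmono : forall n m, (n < m)%nat -> f m < f n).
  { intros n m Hnm. induction Hnm.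
    - apply Hdec.
    - pose proof (Hdec m). lra. }
  assert (Hb0 : forall n, f n <= f 0%nat).
  { intro n. destruct n; [lra|]. apply Rlt_le, Hmono. lia. }
  assert (Hf0 : f 0%nat = dl p q) by (unfold f, sq; cbn; rewrite mobius_id; auto).
  assert (HM : 0 <= dl p q) by (apply dl_nonneg; auto).
  destruct (entry_bound p q (dl p q) Hp Hq HM) as [K [HK HKb]].
  assert (Hent : forall n, Rabs (ma (sq n)) <= K /\ Rabs (mb (sq n)) <= K /\
      Rabs (mc (sq n)) <= K /\ Rabs (md (sq n)) <= K).
  { intro n. apply HKb; [apply Hdet, HG|]. rewrite <- Hf0. apply Hb0. }
  set (eta := eps/(2*K+1)).
  assert (Heta : 0 < eta) by (unfold eta; apply Rdiv_lt_0_compat; lra).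
  set (N1 := S (Z.to_nat (up (2*K/eta)))).
  set (S0 := seq 0 N1).
  set (F := fun n => (((idx K eta (ma (sq n)), idx K eta (mb (sq n))), idx K eta (mc (sq n))),
      idx K eta (md (sq n)))).
  apply (pigeon F (list_prod (list_prod (list_prod S0 S0) S0) S0)).
  - intros n m E. unfold F in E. injection E as E1 E2 E3 E4.
    destruct (Hent n) as [A1 [A2 [A3 A4]]]. destruct (Hent m) as [B1 [B2 [B3 B4]]].
    assert (Heq : sq n = sq m).
    { apply (close_eq G eps K); auto;
      apply (idx_close K); auto. }
    destruct (lt_eq_lt_dec n m) as [[Hlt|Heq']|Hlt]; auto.
    + pose proof (Hmono _ _ Hlt). unfold f in H. rewrite Heq in H. lra.
    + pose proof (Hmono _ _ Hlt). unfold f in H. rewrite Heq in H. lra.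
  - intro n. destruct (Hent n) as [A1 [A2 [A3 A4]]]. unfold F, S0.
    repeat apply in_prod; apply in_seq; split; try lia; apply idx_lt; auto.
Qed.

Lemma arcosh_mono s t : 0 <= s -> s <= t -> arcosh (1+s) <= arcosh (1+t).
Proof.
  intros. unfold arcosh. apply ln_le.
  - pose proof (sqrt_pos ((1+s)*(1+s)-1)). lra.
  - apply Rplus_le_compat; [lra|]. apply sqrt_le_1_alt. nra.
Qed.

Lemma dl_sym z w : dl z w = dl w z.
Proof. unfold dl. replace (2*snd w*snd z) with (2*snd z*snd w) by ring.
  unfold Rdiv. f_equal. ring. Qed.

Lemma inv_mul_l g : det2 g = 1 -> mat_mul (mat_inv g) g = mat_id.
Proof. destruct g as [a b c d]. unfold det2, mat_mul, mat_inv, mat_id; cbn. intro H.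
  f_equal; lra. Qed.

Lemma det_inv g : det2 (mat_inv g) = det2 g.
Proof. unfold det2, mat_inv; cbn. ring. Qed.

Lemma dH_le_of_dl z w z' w' : 0 < snd z -> 0 < snd w -> dl z w <= dl z' w' -> dH z w <= dH z' w'.
Proof. intros. rewrite !dH_dl. apply arcosh_mono; auto. apply dl_nonneg; auto. Qed.

Theorem proposition2p2 (G : Mat2 -> Prop) (z0 : C) :
  Fuchsian G -> H2 z0 ->
  (forall g, G g -> mobius g z0 = z0 -> g = mat_id \/ g = mat_negid) ->
  geodesic_cover G (U_set G z0) (Dirichlet G z0).
Proof.
  intros HF Hz0 _.
  pose proof HF as [[Hdet [Hid [Hmul Hinv]]] _].
  assert (Dz0 : Dirichlet G z0 z0).
  { split; auto. intros g Hg. apply dH_le_of_dl; auto.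
    unfold dl at 1. replace ((fst z0 - fst z0)^2 + (snd z0 - snd z0)^2) with 0 by ring.
    unfold Rdiv. rewrite Rmult_0_l. apply dl_nonneg; auto. apply H2_mob; auto. }
  split; [|split].
  - intros g [Hg _]; auto.
  - split; auto. exists z0. split; auto. rewrite mobius_id. exists z0. split; auto.
  - intros p q Hp Hq.
    destruct (exists_min G p q HF (proj1 Hp) (proj1 Hq)) as [g0 [Hg0 Hmin]].
    exists g0. split.
    + split; auto. exists q. split; auto. exists p. split; auto.
      assert (Hq0 : H2 (mobius g0 q)) by (apply H2_mob; auto; apply Hq).
      split; auto. intros g Hg.
      assert (Hgp : H2 (mobius g p)) by (apply H2_mob; auto; apply Hp).
      apply dH_le_of_dl; auto; [apply (proj1 Hp)|].
      pose proof (Hdet g Hg) as Dg. pose proof (Hdet g0 Hg0) as Dg0.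
      assert (Di : det2 (mat_inv g) = 1) by (rewrite det_inv; auto).
      rewrite <- (dl_iso (mat_inv g) (mobius g0 q) (mobius g p)) by (auto; first [apply Hq0 | apply Hgp]).
      rewrite <- !mob_mul by (auto; first [apply Hp | apply Hq]).
      rewrite inv_mul_l, mobius_id by auto.
      rewrite (dl_sym _ p), (dl_sym _ p). apply Hmin. apply Hmul; auto.
    + intros g Hg. apply dH_le_of_dl; [apply Hp | apply H2_mob; auto; apply Hq | apply Hmin; auto].
Qed.
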